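(* Let $(\mathcal H,\Delta,\delta,\mu,\mathbf 1,S,\beta)$ be a braided Hopf algebra and let $K:\mathcal H\otimes\mathcal H\to\mathbb C$ be a $\beta$-invariant linear functional. Put $\widetilde K:=K\circ(S\otimes\mathrm{id})\circ\Delta:\mathcal H\to\mathbb C$. If $K\star\mu=\mu\star K$, then $\widetilde K\star\mathrm{id}=\mathrm{id}\star\widetilde K$, i.e. $(\widetilde K\otimes\mathrm{id})\circ\Delta=(\mathrm{id}\otimes\widetilde K)\circ\Delta$ as maps $\mathcal H\to\mathcal H$.
   Context: Braided vector space $(V,\beta)$: $\beta\in\mathrm{Aut}(V\otimes V)$ satisfying the braid equation $(\beta\otimes\mathrm{id})(\mathrm{id}\otimes\beta)(\beta\otimes\mathrm{id})=(\mathrm{id}\otimes\beta)(\beta\otimes\mathrm{id})(\mathrm{id}\otimes\beta)$. $\beta_{m,n}$: $\beta_{0,0}=\mathrm{id}_{\mathbb C}$, $\beta_{1,0}=\beta_{0,1}=\mathrm{id}_V$, $\beta_{1,m+1}=(\mathrm{id}_V\otimes\beta_{1,m})(\beta\otimes\mathrm{id})$, $\beta_{n+1,m}=(\beta_{n,m}\otimes\mathrm{id}_V)(\mathrm{id}\otimes\beta_{1,m})$. $f:V^{\otimes m}\to V^{\otimes n}$ is $\beta$-invariant if $(f\otimes\mathrm{id})\beta_{1,m}=\beta_{1,n}(\mathrm{id}\otimes f)$, $\beta^{-1}$-invariant if $(\mathrm{id}\otimes f)\beta_{m,1}=\beta_{n,1}(f\otimes\mathrm{id})$, $\beta$-compatible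 if both; for a functional $K$ on $V\otimes V$, $\beta$-invariance means $(K\otimes\mathrm{id})\circ\beta_{1,2}=\mathrm{id}\otimes K$. A braided bialgebra $(\mathcal H,\Delta,\delta,\mu,\mathbf 1,\beta)$: unital associative algebra and coassociative counital coalgebra with braiding $\beta$ such that $\mu,\mathbf 1,\Delta,\delta$ are $\beta$-compatible, $\Delta\circ\mu=(\mu\otimes\mu)\circ\Lambda$ with $\Lambda:=(\mathrm{id}\otimes\beta\otimes\mathrm{id})(\Delta\otimes\Delta)$, $\Delta(\mathbf 1)=\mathbf 1\otimes\mathbf 1$, $\delta\circ\mu=\delta\otimes\delta$, $\delta(\mathbf 1)=1$. It is a braided Hopf algebra if there is a linear $S:\mathcal H\to\mathcal H$ with $\mu\circ(S\otimes\mathrm{id})\circ\Delta=\mathbf 1\delta=\mu\circ(\mathrm{id}\otimes S)\circ\Delta$. Convolution: $f\star g=m\circ(f\otimes g)\circ\Delta_{\mathrm{coalg}}$; on $\mathcal H\otimes\mathcal H$ the comultiplication is $\Lambda$, so $K\star\mu=(K\otimes\mu)\circ\Lambda$ and $\mu\star K=(\mu\otimes K)\circ\Lambda$ (identifying $\mathbb C\otimes\mathcal H\cong\mathcal H$). *)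

(* Defs.v *)
From HB Require Import structures.
From mathcomp Require Import all_boot all_algebra.
Set Implicit Arguments. Unset Strict Implicit. Unset Printing Implicit Defensive.
Import GRing.Theory.
Local Open Scope ring_scope.

(* Every vector space over the field R has a basis; we fix the vector space *)
(* H to be the free vector space on an (arbitrary) basis type I.  Then the  *)
(* tensor power H^{(x)k} is the free vector space on k-sequences of I,      *)
(* e_{i1} (x) ... (x) e_{ik}  <->  [:: i1; ...; ik]   (k = 0 gives R).      *)
(* An element of a tensor power is a finite formal linear combination       *)
(* (tens); two of them are equal iff all their coefficients (coef) agree.   *)
(* A linear map H^{(x)m} -> H^{(x)n} is given by its values on the basis    *)
(* tensors (lmap); [typed m n f] says these values lie in H^{(x)n}, and     *)
(* [leqm m f g] is equality of linear maps with domain H^{(x)m}.            *)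
Section Tensor.
Variables (R : fieldType) (I : eqType).

Definition tens := seq (R * seq I).
Definition lmap := seq I -> tens.

Definition coef (v : tens) (u : seq I) : R := \sum_(p <- v | p.2 == u) p.1.

Definition lid : lmap := fun w => [:: (1, w)].

Definition lapp (f : lmap) (v : tens) : tens :=
  flatten [seq [seq (p.1 * q.1, q.2) | q <- f p.2] | p <- v].

Definition lcomp (g f : lmap) : lmap := fun w => lapp g (f w).

(* tensor product f (x) g, where f has domain H^{(x)m} *)
Definition ltens (m : nat) (f g : lmap) : lmap :=
  fun w => [seq (p.1 * q.1, p.2 ++ q.2) | p <- f (take m w), q <- g (drop m w)].

Definition leqm (m : nat) (f g : lmap) : Prop :=
  forall w : seq I, size w = m -> forall u : seq I, coef (f w) u = coef (g w) u.

Definition typed (m n : nat) (f : lmap) : Prop :=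
  forall w : seq I, size w = m -> all (fun q => size q.2 == n) (f w).

Variable b : lmap.

Fixpoint beta1m (m : nat) : lmap :=
  match m with
  | 0 => lid
  | m'.+1 => lcomp (ltens 1 lid (beta1m m')) (ltens 2 b lid)
  end.

Fixpoint betan1 (n : nat) : lmap :=
  match n with
  | 0 => lid
  | n'.+1 => lcomp (ltens n'.+1 (betan1 n') lid) (ltens n' lid (beta1m 1))
  end.

Definition beta_inv (m n : nat) (f : lmap) : Prop :=
  leqm (1 + m) (lcomp (ltens m f lid) (beta1m m)) (lcomp (beta1m n) (ltens 1 lid f)).

Definition betainv_inv (m n : nat) (f : lmap) : Prop :=
  leqm (m + 1) (lcomp (ltens 1 lid f) (betan1 m)) (lcomp (betan1 n) (ltens m f lid)).

Definition beta_compat (m n : nat) (f : lmap) : Prop :=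
  beta_inv m n f /\ betainv_inv m n f.

Definition braided_vs : Prop :=
  [/\ typed 2 2 b,
      (exists2 bi : lmap, typed 2 2 bi &
         leqm 2 (lcomp b bi) lid /\ leqm 2 (lcomp bi b) lid) &
      leqm 3 (lcomp (ltens 2 b lid) (lcomp (ltens 1 lid b) (ltens 2 b lid)))
             (lcomp (ltens 1 lid b) (lcomp (ltens 2 b lid) (ltens 1 lid b)))].

Definition Lambda (Delta : lmap) : lmap :=
  lcomp (ltens 1 lid (ltens 2 b lid)) (ltens 1 Delta Delta).

Definition braided_bialgebra (Delta delta mu one : lmap) : Prop :=
  braided_vs /\
  [/\ [/\ typed 1 2 Delta, typed 1 0 delta, typed 2 1 mu & typed 0 1 one],
      [/\ leqm 3 (lcomp mu (ltens 2 mu lid)) (lcomp mu (ltens 1 lid mu)),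
          leqm 1 (lcomp mu (ltens 0 one lid)) lid &
          leqm 1 (lcomp mu (ltens 1 lid one)) lid],
      [/\ leqm 1 (lcomp (ltens 1 Delta lid) Delta) (lcomp (ltens 1 lid Delta) Delta),
          leqm 1 (lcomp (ltens 1 delta lid) Delta) lid &
          leqm 1 (lcomp (ltens 1 lid delta) Delta) lid],
      [/\ beta_compat 2 1 mu, beta_compat 0 1 one,
          beta_compat 1 2 Delta & beta_compat 1 0 delta] &
      [/\ leqm 2 (lcomp Delta mu) (lcomp (ltens 2 mu mu) (Lambda Delta)),
          leqm 0 (lcomp Delta one) (ltens 0 one one),
          leqm 2 (lcomp delta mu) (ltens 1 delta delta) &
          leqm 0 (lcomp delta one) lid]].

Definition is_antipode (Delta delta mu one S : lmap) : Prop :=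
  [/\ typed 1 1 S,
      leqm 1 (lcomp mu (lcomp (ltens 1 S lid) Delta)) (lcomp one delta) &
      leqm 1 (lcomp mu (lcomp (ltens 1 lid S) Delta)) (lcomp one delta)].

Definition braided_hopf (Delta delta mu one S : lmap) : Prop :=
  braided_bialgebra Delta delta mu one /\ is_antipode Delta delta mu one S.

End Tensor.

(* Main.v *)
Require Import Defs.
From HB Require Import structures.
From mathcomp Require Import all_boot all_algebra.
From mathcomp Require Import zify.
From Stdlib Require Import Setoid Morphisms.
Set Implicit Arguments. Unset Strict Implicit. Unset Printing Implicit Defensive.
Import GRing.Theory.

Module Local_F1.
Local Open Scope ring_scope.
Section Found.
Variables (R : fieldType) (I : eqType).
Local Notation tens := (tens R I).
Local Notation lmap := (lmap R I).
Local Notation coef := (@coef R I).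
Local Notation lapp := (@lapp R I).
Local Notation lid := (@lid R I).

Definition teq (v v' : tens) := forall u, coef v u = coef v' u.

Lemma eq_teq v v' : v = v' -> teq v v'. Proof. by move=> ->. Qed.
Lemma teq_refl v : teq v v. Proof. by []. Qed.
Lemma teq_sym v v' : teq v v' -> teq v' v. Proof. by move=> e u; rewrite e. Qed.
Lemma teq_trans v1 v2 v3 : teq v1 v2 -> teq v2 v3 -> teq v1 v3.
Proof. by move=> e1 e2 u; rewrite e1 e2. Qed.

Lemma coef_nil u : coef ([::] : tens) u = 0. Proof. by rewrite /Defs.coef big_nil. Qed.
Lemma coefE v u : coef v u = \sum_(p <- v) (if p.2 == u then p.1 else 0).
Proof. by rewrite /Defs.coef big_mkcond. Qed.
Lemma coef_cat v1 v2 u : coef (v1 ++ v2) u = coef v1 u + coef v2 u.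
Proof. by rewrite /Defs.coef big_cat. Qed.

Lemma coef_lapp (f : lmap) v u :
  coef (lapp f v) u = \sum_(p <- v) p.1 * coef (f p.2) u.
Proof.
rewrite coefE /Defs.lapp big_flatten big_map; apply: eq_bigr => p _.
rewrite coefE big_map mulr_sumr; apply: eq_bigr => q _ /=.
by case: ifP; rewrite ?mulr0.
Qed.

Lemma coef_mem v s : coef v s != 0 -> s \in [seq p.2 | p <- v].
Proof.
apply: contraR => ns; rewrite coefE big1_seq // => p /andP[_ pv].
case: eqP => // e; case/negP: ns; rewrite -e; exact: map_f.
Qed.

Lemma sum_group (v : tens) (F : seq I -> R) (X : seq (seq I)) :
  uniq X -> {subset [seq p.2 | p <- v] <= X} ->
  \sum_(p <- v) p.1 * F p.2 = \sum_(s <- X) coef v s * F s.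
Proof.
move=> uX sub.
transitivity (\sum_(s <- X) \sum_(p <- v) (if p.2 == s then p.1 else 0) * F s).
  rewrite exchange_big; apply: eq_big_seq => p pv.
  rewrite (bigD1_seq p.2) //=; last by apply: sub; exact: map_f.
  rewrite eqxx big1 ?addr0 // => s ns; by rewrite eq_sym (negbTE ns) mul0r.
by apply: eq_bigr => s _; rewrite coefE mulr_suml.
Qed.

Lemma lapp_teq (f : lmap) v v' : teq v v' -> teq (lapp f v) (lapp f v').
Proof.
move=> e u; rewrite !coef_lapp.
set X := undup ([seq p.2 | p <- v] ++ [seq p.2 | p <- v']).
rewrite (@sum_group v (fun s => coef (f s) u) X) ?undup_uniq //; last first.
  by move=> s hs; rewrite mem_undup mem_cat hs.
rewrite (@sum_group v' (fun s => coef (f s) u) X) ?undup_uniq //; last first.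
  by move=> s hs; rewrite mem_undup mem_cat hs orbT.
by apply: eq_bigr => s _; rewrite e.
Qed.

Definition bnd (N : nat) (v : tens) := forall s, coef v s != 0 -> (N <= size s)%N.

Lemma lapp_ext N (f g : lmap) v : bnd N v ->
  (forall s, (N <= size s)%N -> teq (f s) (g s)) -> teq (lapp f v) (lapp g v).
Proof.
move=> bv efg u; rewrite !coef_lapp.
set X := undup [seq p.2 | p <- v].
rewrite (@sum_group v (fun s => coef (f s) u) X) ?undup_uniq //; last first.
  by move=> s hs; rewrite mem_undup.
rewrite (@sum_group v (fun s => coef (g s) u) X) ?undup_uniq //; last first.
  by move=> s hs; rewrite mem_undup.
apply: eq_bigr => s _; have [->|nz] := eqVneq (coef v s) 0; first by rewrite !mul0r.
by rewrite efg // bv.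
Qed.

Lemma lapp_eqf (f g : lmap) v : (forall s, f s = g s) -> lapp f v = lapp g v.
Proof. by move=> e; rewrite /Defs.lapp; congr flatten; apply: eq_map => p; rewrite e. Qed.

Lemma lapp_lapp (f g : lmap) v : teq (lapp g (lapp f v)) (lapp (lcomp g f) v).
Proof.
move=> u; rewrite !coef_lapp /Defs.lapp big_flatten big_map; apply: eq_bigr => p _.
rewrite big_map coef_lapp mulr_sumr; apply: eq_bigr => q _ /=; by rewrite mulrA.
Qed.

Lemma lapp_lid v : teq (lapp lid v) v.
Proof.
move=> u; rewrite coef_lapp coefE; apply: eq_bigr => p _.
rewrite /Defs.lid coefE big_cons big_nil addr0 /=; by case: ifP; rewrite ?mulr1 ?mulr0.
Qed.

Lemma sum_neq0 (T : eqType) (r : seq T) (F : T -> R) : \sum_(x <- r) F x != 0 ->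
  exists2 x, x \in r & F x != 0.
Proof.
move=> nz; case: (boolP (has (fun x => F x != 0) r)) => [/hasP[x xr Fx]|]; first by exists x.
move/hasPn => h; case/negP: nz; apply/eqP; rewrite big1_seq // => x /andP[_ xr].
by move: (h x xr); rewrite negbK => /eqP.
Qed.


Definition at_ (k m : nat) (f : lmap) : lmap := fun w =>
  [seq (q.1, take k w ++ q.2 ++ drop (k + m) w) | q <- f (take m (drop k w))].
Definition ap k m (f : lmap) v := lapp (at_ k m f) v.

Lemma bnd_ap N N' k m n (f : lmap) v : bnd N v -> typed m n f -> (k + m <= N)%N ->
  (N' <= N + n - m)%N -> bnd N' (ap k m f v).
Proof.
move=> bv tf km NN s; rewrite coef_lapp.
rewrite (@sum_group v (fun t => coef (at_ k m f t) s) (undup [seq p.2 | p <- v])) ?undup_uniq //;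
  last by move=> t; rewrite mem_undup.
case/sum_neq0 => t _; rewrite mulf_eq0 negb_or => /andP[nzv nza].
have st := bv _ nzv.
move/coef_mem: nza => /mapP[q /mapP[q' qin ->] ->] /=.
have sz : size (take m (drop k t)) = m by rewrite size_takel // size_drop; lia.
move/allP: (tf _ sz) => /(_ _ qin) /eqP sq.
rewrite !size_cat sq size_takel ?size_drop; lia.
Qed.

Lemma take_catD (T : Type) (A B : seq T) a n : size A = a -> take (a + n) (A ++ B) = A ++ take n B.
Proof. by move=> <-; rewrite take_cat ltnNge leq_addr /= addKn. Qed.
Lemma drop_catD (T : Type) (A B : seq T) a n : size A = a -> drop (a + n) (A ++ B) = drop n B.
Proof. by move=> <-; rewrite drop_cat ltnNge leq_addr /= addKn. Qed.
Lemma drop_catl (T : Type) (A B : seq T) n : (n <= size A)%N -> drop n (A ++ B) = drop n A ++ B.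
Proof.
move=> h; rewrite drop_cat; case: ltnP => h' //.
have e : n = size A by lia.
by rewrite e subnn drop0 drop_size.
Qed.
Lemma dropD (T : Type) (s : seq T) a b : drop (a + b) s = drop b (drop a s).
Proof. by rewrite drop_drop addnC. Qed.

Lemma map_lapp (h : seq I -> seq I) (t : tens) :
  [seq (q.1, h q.2) | q <- t] = lapp (fun s => [:: (1, h s)]) t.
Proof. by elim: t => //= q t IH; rewrite IH /Defs.lapp /= mulr1. Qed.

Lemma ap_teq k m (f : lmap) v v' : teq v v' -> teq (ap k m f v) (ap k m f v').
Proof. exact: lapp_teq. Qed.

Lemma ap_ext k m (f g : lmap) v : bnd (k + m) v -> leqm m f g -> teq (ap k m f v) (ap k m g v).
Proof.
move=> bv e; apply: (lapp_ext bv) => s hs; rewrite /at_ !(map_lapp (fun x => take k s ++ x ++ drop (k + m) s)); apply: lapp_teq.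
apply: e; rewrite size_takel // size_drop; lia.
Qed.

Lemma ap_lid k m v : teq (ap k m lid v) v.
Proof.
rewrite /ap (@lapp_eqf _ lid); first exact: lapp_lid.
by move=> s; rewrite /at_ /Defs.lid /= dropD !cat_take_drop.
Qed.

Lemma ap_comp k m n (f g : lmap) v : typed m n f -> bnd (k + m) v ->
  teq (ap k m (lcomp g f) v) (ap k n g (ap k m f v)).
Proof.
move=> tf bv; apply: teq_sym; apply: teq_trans; first exact: lapp_lapp.
apply: (lapp_ext bv) => s hs.
have sA : size (take k s) = k by rewrite size_takel //; lia.
have sx : size (take m (drop k s)) = m by rewrite size_takel // size_drop; lia.
move/allP: (tf _ sx) => tq.
rewrite /lcomp /at_ /Defs.lcomp /Defs.lapp map_flatten -!map_comp.
apply: eq_teq; congr flatten; apply/eq_in_map => q /tq /eqP sq /=.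
rewrite (take_size_cat _ sA) (drop_size_cat _ sA) (take_size_cat _ sq) -!map_comp.
rewrite dropD (drop_size_cat _ sA) (drop_size_cat _ sq); apply: eq_map => r /=; done.
Qed.


Lemma ap_tens k m1 m2 n1 (f g : lmap) v : typed m1 n1 f -> bnd (k + m1 + m2) v ->
  teq (ap k (m1 + m2) (ltens m1 f g) v) (ap (k + n1) m2 g (ap k m1 f v)).
Proof.
move=> tf bv; apply: teq_sym; apply: teq_trans; first exact: lapp_lapp.
apply: (lapp_ext bv) => s hs.
have sA : size (take k s) = k by rewrite size_takel //; lia.
have sx : size (take m1 (drop k s)) = m1 by rewrite size_takel // size_drop; lia.
move/allP: (tf _ sx) => tq.
have e1 : take m1 (take (m1 + m2) (drop k s)) = take m1 (drop k s) by rewrite take_takel // leq_addr.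
have e2 : drop m1 (take (m1 + m2) (drop k s)) = take m2 (drop (k + m1) s) by rewrite dropD (take_drop m2 m1) (addnC m2).
rewrite /lcomp /at_ /Defs.lcomp /Defs.ltens /Defs.lapp e1 e2 /= map_flatten -!map_comp.
apply: eq_teq; congr flatten; apply/eq_in_map => q /tq /eqP sq /=.
rewrite (take_catD _ _ sA) (take_size_cat _ sq) (drop_catD _ _ sA) (drop_size_cat _ sq) -!map_comp.
rewrite -addnA (drop_catD _ _ sA) dropD (drop_size_cat _ sq).
apply: eq_map => r /=; by rewrite -!catA addnA (dropD _ (k + m1)).
Qed.

Lemma teq_swap (P Q : tens) (h : seq I -> seq I -> seq I) :
  teq (flatten [seq [seq (p.1 * q.1, h p.2 q.2) | q <- Q] | p <- P])
      (flatten [seq [seq (q.1 * p.1, h p.2 q.2) | p <- P] | q <- Q]).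
Proof.
move=> u; rewrite !coefE !big_flatten !big_map.
under eq_bigr => p _ do rewrite big_map.
under [RHS]eq_bigr => q _ do rewrite big_map.
rewrite exchange_big /=; apply: eq_bigr => q _; apply: eq_bigr => p _; by rewrite mulrC.
Qed.

Lemma ap_tens' k m1 m2 (f g : lmap) v : bnd (k + m1 + m2) v ->
  teq (ap k (m1 + m2) (ltens m1 f g) v) (ap k m1 f (ap (k + m1) m2 g v)).
Proof.
move=> bv; apply: teq_sym; apply: teq_trans; first exact: lapp_lapp.
apply: (lapp_ext bv) => s hs.
have sB : size (take (k + m1) s) = k + m1 by rewrite size_takel //; lia.
have e1 : take m1 (take (m1 + m2) (drop k s)) = take m1 (drop k s) by rewrite take_takel // leq_addr.
have e2 : drop m1 (take (m1 + m2) (drop k s)) = take m2 (drop (k + m1) s) by rewrite dropD (take_drop m2 m1) (addnC m2).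
have e3 : take k (take (k + m1) s) = take k s by rewrite take_takel // leq_addr.
have e4 : drop k (take (k + m1) s) = take m1 (drop k s) by rewrite (take_drop m1 k) addnC.
have sD : size (drop k (take (k + m1) s)) = m1 by rewrite size_drop sB; lia.
rewrite /lcomp /at_ /Defs.lcomp /Defs.ltens /Defs.lapp e1 e2 /= map_flatten -!map_comp.
set Q := g _; set P := f _.
pose H := fun x y => take k s ++ (x ++ y) ++ drop (k + (m1 + m2)) s.
apply: (@teq_trans _ (flatten [seq [seq (q.1 * p.1, H p.2 q.2) | p <- P] | q <- Q])).
  apply: eq_teq; congr flatten; apply/eq_in_map => q _ /=.
  have dk Y : drop k (take (k+m1) s ++ Y) = drop k (take (k+m1) s) ++ Y by rewrite drop_catl // sB leq_addr.
  have dkm Y : drop (k+m1) (take (k+m1) s ++ Y) = Y by rewrite (drop_size_cat _ sB).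
  have tk Y : take k (take (k+m1) s ++ Y) = take k s by rewrite takel_cat ?e3 // sB leq_addr.
  rewrite tk dk dkm (take_size_cat _ sD) e4 -map_comp.
  apply: eq_map => p /=; by rewrite /H -!catA addnA (dropD _ (k + m1)).
apply: teq_trans; first exact: (teq_sym (teq_swap P Q H)).
apply: eq_teq; congr flatten; apply/eq_in_map => p _ /=.
by rewrite -map_comp.
Qed.

Lemma bnd_le N N' v : bnd N v -> (N' <= N)%N -> bnd N' v.
Proof. by move=> b h s /b; lia. Qed.

Lemma typed_lid n : typed n n lid.
Proof. by move=> w sw; rewrite /Defs.lid /= sw eqxx. Qed.

Lemma ap_swap i j j' m1 n1 m2 (f g : lmap) v : typed m1 n1 f -> (i + m1 <= j)%N ->
  j' = (j + n1 - m1)%N -> bnd (j + m2) v ->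
  teq (ap i m1 f (ap j m2 g v)) (ap j' m2 g (ap i m1 f v)).
Proof.
move=> tf hij -> bv.
have [d ed] : exists d, j = (i + m1 + d)%N by exists (j - (i + m1))%N; lia.
subst j.
have -> : (i + m1 + d + n1 - m1 = i + n1 + d)%N by lia.
have e1 : teq (ap (i + m1 + d) m2 g v) (ap (i + m1) (d + m2) (ltens d lid g) v).
  apply: teq_trans; first by apply: ap_teq; exact: (teq_sym (@ap_lid (i + m1) d v)).
  apply: teq_sym; exact: (@ap_tens (i + m1) d m2 d lid g v (@typed_lid d) bv).
apply: teq_trans; first exact: (ap_teq _ _ _ e1).
have bv' : bnd (i + m1 + (d + m2)) v by rewrite addnA.
apply: teq_trans; first exact: (teq_sym (@ap_tens' i m1 (d + m2) f (ltens d lid g) v bv')).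
apply: teq_trans; first exact: (@ap_tens i m1 (d + m2) n1 f (ltens d lid g) v tf bv').
apply: teq_trans; first apply: (@ap_tens (i + n1) d m2 d lid g _ (@typed_lid d)).
  by apply: (bnd_ap bv tf); lia.
apply: ap_teq; exact: ap_lid.
Qed.

Lemma typed_lcomp m n p (f g : lmap) : typed m n f -> typed n p g -> typed m p (lcomp g f).
Proof.
move=> tf tg w sw; apply/allP => r; rewrite /Defs.lcomp /Defs.lapp.
case/flattenP => l /mapP[q qin ->] /mapP[r' r'in ->] /=.
move/allP: (tf w sw) => /(_ q qin) /eqP sq.
by move/allP: (tg _ sq) => /(_ r' r'in).
Qed.

Lemma typed_ltens m1 n1 m2 n2 (f g : lmap) : typed m1 n1 f -> typed m2 n2 g ->
  typed (m1 + m2) (n1 + n2) (ltens m1 f g).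
Proof.
move=> tf tg w sw; apply/allP => r; rewrite /Defs.ltens /=.
case/flattenP => l /mapP[p pin ->] /mapP[q qin ->] /=.
have s1 : size (take m1 w) = m1 by rewrite size_takel // sw leq_addr.
have s2 : size (drop m1 w) = m2 by rewrite size_drop sw addKn.
rewrite size_cat; move/allP: (tf _ s1) => /(_ p pin) /eqP ->.
by move/allP: (tg _ s2) => /(_ q qin) /eqP ->.
Qed.

Lemma typed_ltens' m m1 n1 n2 (f g : lmap) : typed m1 n1 f -> typed (m - m1) n2 g -> (m1 <= m)%N ->
  typed m (n1 + n2) (ltens m1 f g).
Proof.
move=> tf tg h; have -> : m = (m1 + (m - m1))%N by lia.
exact: typed_ltens.
Qed.

Lemma ap_tensm k m m1 n1 (f g : lmap) v : typed m1 n1 f -> (m1 <= m)%N -> bnd (k + m) v ->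
  teq (ap k m (ltens m1 f g) v) (ap (k + n1) (m - m1) g (ap k m1 f v)).
Proof.
move=> tf h bv; have e : m = (m1 + (m - m1))%N by lia.
rewrite {1}e; apply: ap_tens => //; by rewrite -addnA -e.
Qed.

Lemma bnd_ap_ex N k m n (f : lmap) v : bnd N v -> typed m n f -> (k + m <= N)%N ->
  bnd (N + n - m) (ap k m f v).
Proof. move=> bv tf h; exact: (bnd_ap bv tf h (leqnn _)). Qed.

Lemma teq_compat a b a' b' : teq a b -> a = a' -> b = b' -> teq a' b'.
Proof. by move=> e <- <-. Qed.

Lemma ap_ext' k m (f g : lmap) v : bnd (m + k) v -> leqm m f g -> teq (ap k m f v) (ap k m g v).
Proof. by rewrite addnC; exact: ap_ext. Qed.

Lemma teq_lhs a b : (forall x, x = b -> teq a x) -> teq a b.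
Proof. by move=> h; apply: h. Qed.

Lemma bnd_lid n (w : seq I) : size w = n -> bnd n (lid w).
Proof.
move=> sw s; rewrite /Defs.lid coefE big_cons big_nil addr0 /=.
by case: (w =P s) => [<- _|]; rewrite ?eqxx // sw.
Qed.

Lemma ap0_lid m (F : lmap) (w : seq I) : size w = m -> teq (ap 0 m F (lid w)) (F w).
Proof.
move=> sw u; rewrite /ap coef_lapp /Defs.lid big_cons big_nil addr0 /= mul1r.
have h : (size w <= m)%N by rewrite sw.
rewrite /at_ take0 drop0 add0n (drop_oversize h) (take_oversize h) /=.
congr coef; by elim: (F w) => //= [[a c] l ->]; rewrite cats0.
Qed.
End Found.
End Local_F1.
Import Local_F1.

#[global] Instance teq_Equiv (R : fieldType) (I : eqType) : Equivalence (@teq R I).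
Proof. split; [exact: teq_refl | exact: teq_sym | exact: teq_trans]. Qed.
#[global] Instance ap_Proper (R : fieldType) (I : eqType) k m f :
  Proper (@teq R I ==> @teq R I) (ap k m f).
Proof. move=> v v' e; exact: ap_teq. Qed.

Ltac typ := solve [ repeat (first [ eassumption | (eapply typed_ltens'; [ | | lia]) | eapply typed_lcomp | eapply typed_lid ]) ].
Ltac bndt := match goal with
 | |- bnd ?N (ap _ _ _ _) => tryif is_evar N then (eapply bnd_ap_ex; [bndt | typ | lia]) else (eapply bnd_ap; [bndt | typ | lia | lia])
 | |- bnd _ _ => first [eassumption | eapply bnd_le; [eassumption | lia]]
 end.
Ltac expand_in e := repeat (first [ rewrite ap_lid in e | (rewrite ap_comp in e; [ | typ | bndt ]) | (rewrite ap_tensm in e; [ | typ | lia | bndt ]) ]).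

Ltac ap_eq := repeat (first [reflexivity | match goal with |- @eq nat _ _ => lia | |- _ => f_equal end]).
Ltac ap_exact e := (apply: (teq_compat e); ap_eq).
Arguments ap_swap [R I i j j' m1 n1 m2 f g v].

Section Alg.
Variables (R : fieldType) (I : eqType) (b Delta delta mu one S K : lmap R I).
Local Notation lid := (@lid R I).
Hypotheses (tb : typed 2 2 b) (tD : typed 1 2 Delta) (td : typed 1 0 delta) (tm : typed 2 1 mu)
  (t1 : typed 0 1 one) (tS : typed 1 1 S) (tK : typed 2 0 K).
Hypothesis Hassoc : leqm 3 (lcomp mu (ltens 2 mu lid)) (lcomp mu (ltens 1 lid mu)).
Hypothesis Hunitl : leqm 1 (lcomp mu (ltens 0 one lid)) lid.
Hypothesis Hunitr : leqm 1 (lcomp mu (ltens 1 lid one)) lid.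
Hypothesis Hcoass : leqm 1 (lcomp (ltens 1 Delta lid) Delta) (lcomp (ltens 1 lid Delta) Delta).
Hypothesis Hcounl : leqm 1 (lcomp (ltens 1 delta lid) Delta) lid.
Hypothesis Hcounr : leqm 1 (lcomp (ltens 1 lid delta) Delta) lid.
Hypothesis Hbmu : beta_compat b 2 1 mu.
Hypothesis Hbone : beta_compat b 0 1 one.
Hypothesis Hdmu : leqm 2 (lcomp Delta mu) (lcomp (ltens 2 mu mu) (Lambda b Delta)).
Hypothesis Hdone : leqm 0 (lcomp Delta one) (ltens 0 one one).
Hypothesis HantiL : leqm 1 (lcomp mu (lcomp (ltens 1 S lid) Delta)) (lcomp one delta).
Hypothesis HantiR : leqm 1 (lcomp mu (lcomp (ltens 1 lid S) Delta)) (lcomp one delta).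
Hypothesis HKinv : leqm 3 (lcomp (ltens 2 K lid) (beta1m b 2)) (ltens 1 lid K).
Hypothesis HKcomm : leqm 2 (lcomp (ltens 2 K mu) (Lambda b Delta)) (lcomp (ltens 2 mu K) (Lambda b Delta)).

Lemma beta1m0E : beta1m b 0 = lid. Proof. by []. Qed.
Lemma beta1m1E : beta1m b 1 = lcomp (ltens 1 lid lid) (ltens 2 b lid). Proof. by []. Qed.
Lemma beta1m2E : beta1m b 2 = lcomp (ltens 1 lid (beta1m b 1)) (ltens 2 b lid). Proof. by []. Qed.
Lemma betan10E : betan1 b 0 = lid. Proof. by []. Qed.
Lemma betan11E : betan1 b 1 = lcomp (ltens 1 (betan1 b 0) lid) (ltens 0 lid (beta1m b 1)). Proof. by []. Qed.
Lemma betan12E : betan1 b 2 = lcomp (ltens 2 (betan1 b 1) lid) (ltens 1 lid (beta1m b 1)). Proof. by []. Qed.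
Lemma LambdaE : Lambda b Delta = lcomp (ltens 1 lid (ltens 2 b lid)) (ltens 1 Delta Delta). Proof. by []. Qed.

Ltac unf e := rewrite ?beta1m2E ?betan12E ?betan11E ?beta1m1E ?beta1m0E ?betan10E ?LambdaE in e.

Ltac derive H n := let e := fresh "e" in let bv := fresh "bv" in move=> bv; pose proof (@ap_ext' R I _ n _ _ _ bv H) as e; unf e; expand_in e; ap_exact e.

Implicit Types (v : tens R I) (k : nat).

Lemma L_assoc k v : bnd (3 + k) v -> teq (ap k 2 mu (ap k 2 mu v)) (ap k 2 mu (ap (1+k) 2 mu v)).
Proof. derive Hassoc 3%N. Qed.
Lemma L_unitl k v : bnd (1 + k) v -> teq (ap k 2 mu (ap k 0 one v)) v.
Proof. derive Hunitl 1%N. Qed.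
Lemma L_unitr k v : bnd (1 + k) v -> teq (ap k 2 mu (ap (1+k) 0 one v)) v.
Proof. derive Hunitr 1%N. Qed.
Lemma L_coass k v : bnd (1 + k) v -> teq (ap k 1 Delta (ap k 1 Delta v)) (ap (1+k) 1 Delta (ap k 1 Delta v)).
Proof. derive Hcoass 1%N. Qed.
Lemma L_counl k v : bnd (1 + k) v -> teq (ap k 1 delta (ap k 1 Delta v)) v.
Proof. derive Hcounl 1%N. Qed.
Lemma L_counr k v : bnd (1 + k) v -> teq (ap (1+k) 1 delta (ap k 1 Delta v)) v.
Proof. derive Hcounr 1%N. Qed.
Lemma L_bmu1 k v : bnd (3 + k) v -> teq (ap k 2 mu (ap (1+k) 2 b (ap k 2 b v))) (ap k 2 b (ap (1+k) 2 mu v)).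
Proof. case: Hbmu => H _; derive H 3%N. Qed.
Lemma L_bmu2 k v : bnd (3 + k) v -> teq (ap (1+k) 2 mu (ap k 2 b (ap (1+k) 2 b v))) (ap k 2 b (ap k 2 mu v)).
Proof. case: Hbmu => _ H; derive H 3%N. Qed.
Lemma L_bone1 k v : bnd (1 + k) v -> teq (ap k 0 one v) (ap k 2 b (ap (1+k) 0 one v)).
Proof. case: Hbone => H _; derive H 1%N. Qed.
Lemma L_bone2 k v : bnd (1 + k) v -> teq (ap (1+k) 0 one v) (ap k 2 b (ap k 0 one v)).
Proof. case: Hbone => _ H; derive H 1%N. Qed.
Lemma L_dmu k v : bnd (2 + k) v -> teq (ap k 1 Delta (ap k 2 mu v))
  (ap (1+k) 2 mu (ap k 2 mu (ap (1+k) 2 b (ap (2+k) 1 Delta (ap k 1 Delta v))))).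
Proof. derive Hdmu 2%N. Qed.
Lemma L_done k v : bnd (0 + k) v -> teq (ap k 1 Delta (ap k 0 one v)) (ap (1+k) 0 one (ap k 0 one v)).
Proof. derive Hdone 0%N. Qed.
Lemma L_antiL k v : bnd (1 + k) v -> teq (ap k 2 mu (ap k 1 S (ap k 1 Delta v))) (ap k 0 one (ap k 1 delta v)).
Proof. derive HantiL 1%N. Qed.
Lemma L_antiR k v : bnd (1 + k) v -> teq (ap k 2 mu (ap (1+k) 1 S (ap k 1 Delta v))) (ap k 0 one (ap k 1 delta v)).
Proof. derive HantiR 1%N. Qed.
Lemma L_Kinv k v : bnd (3 + k) v -> teq (ap k 2 K (ap (1+k) 2 b (ap k 2 b v))) (ap (1+k) 2 K v).
Proof. derive HKinv 3%N. Qed.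
Lemma L_Kcomm k v : bnd (2 + k) v ->
  teq (ap k 2 mu (ap k 2 K (ap (1+k) 2 b (ap (2+k) 1 Delta (ap k 1 Delta v)))))
      (ap (1+k) 2 K (ap k 2 mu (ap (1+k) 2 b (ap (2+k) 1 Delta (ap k 1 Delta v))))).
Proof. derive HKcomm 2%N. Qed.



Tactic Notation "rw" open_constr(l) := rewrite l; try typ; try bndt; try lia.
Tactic Notation "rwr" open_constr(l) := rewrite -l; try typ; try bndt; try lia.
Tactic Notation "sw" constr(f) constr(g) constr(i) constr(j) constr(j') := rw (ap_swap (R:=R) (I:=I) (f:=f) (g:=g) (i:=i) (j:=j) (j':=j')).
Tactic Notation "swr" constr(f) constr(g) constr(i) constr(j) constr(j') := rwr (ap_swap (R:=R) (I:=I) (f:=f) (g:=g) (i:=i) (j:=j) (j':=j')).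

Definition Mm k v := ap (1+k) 2 mu (ap k 2 mu (ap (1+k) 2 b v)).
Definition Pm k v := ap k 1 Delta (ap k 1 S v).
Definition Dm k v := ap k 1 Delta v.
Definition Gm k v := ap k 2 b (ap (1+k) 1 S (ap k 1 S (ap k 1 Delta v))).
Definition Em k v := ap (1+k) 0 one (ap k 0 one (ap k 1 delta v)).

Lemma C_DG k v : bnd (1 + k) v -> teq (Mm k (Dm k (Gm (1+k) (ap k 1 Delta v)))) (Em k v).
Proof.
move=> bv; rewrite /Mm /Dm /Gm /Em.
sw Delta b k (1+k) (2+k).
sw Delta S k (2+k) (3+k).
sw Delta S k (1+k) (2+k).
sw Delta Delta k (1+k) (2+k).
swr mu mu k (2+k) (1+k).
rw (L_bmu2 (k:=1+k)).
rw (L_coass (k:=k)).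
rwr (L_coass (k:=1+k)).
sw mu S (1+k) (3+k) (2+k).
rw (L_antiR (k:=1+k)).
rw (L_counl (k:=1+k)).
swr one S (1+k) (1+k) (2+k).
rwr (L_bone2 (k:=1+k)).
sw mu one k (2+k) (1+k).
rw (L_antiR (k:=k)).
reflexivity.
Qed.

Ltac lhs_only := apply: teq_lhs => ? ->.

Lemma C_PD k v : bnd (1 + k) v -> teq (Mm k (Pm k (Dm (1+k) (ap k 1 Delta v)))) (Em k v).
Proof.
move=> bv; rewrite /Mm /Pm /Dm /Em.
sw S Delta k (1+k) (1+k).
sw Delta Delta k (1+k) (2+k).
rwr (L_dmu (k:=k)).
rw (L_antiL (k:=k)).
rw (L_done (k:=k)).
reflexivity.
Qed.

Lemma C_eG k v : bnd (1 + k) v -> teq (Mm k (Em k (Gm (1+k) (ap k 1 Delta v)))) (Gm k v).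
Proof.
move=> bv; rewrite /Mm /Em /Gm.
sw delta b k (1+k) k.
sw delta S k (2+k) (1+k).
sw delta S k (1+k) k.
sw delta Delta k (1+k) k.
rw (L_counl (k:=k)).
rwr (L_bone2 (k:=1+k)).
sw mu one k (2+k) (1+k).
rw (L_unitl (k:=k)).
rw (L_unitl (k:=1+k)).
reflexivity.
Qed.

Lemma C_Pe k v : bnd (1 + k) v -> teq (Mm k (Pm k (Em (1+k) (ap k 1 Delta v)))) (Pm k v).
Proof.
move=> bv; rewrite /Mm /Pm /Em.
rw (L_counr (k:=k)).
sw S one k (2+k) (2+k).
sw S one k (1+k) (1+k).
sw Delta one k (2+k) (3+k).
sw Delta one k (1+k) (2+k).
sw b one (1+k) (3+k) (3+k).
rwr (L_bone1 (k:=1+k)).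
sw mu one k (3+k) (2+k).
rw (L_unitr (k:=k)).
rw (L_unitr (k:=1+k)).
reflexivity.
Qed.

Lemma C_MA k v : bnd (6 + k) v ->
  teq (ap (1+k) 2 mu (ap k 2 mu (ap (1+k) 2 b (ap (3+k) 2 mu (ap (2+k) 2 mu (ap (3+k) 2 b v))))))
      (ap (1+k) 2 mu (ap k 2 mu (ap (1+k) 2 b (ap (1+k) 2 mu (ap k 2 mu (ap (1+k) 2 b v)))))).
Proof.
move=> bv.
transitivity (ap (1+k) 2 mu (ap (1+k) 2 mu (ap k 2 mu (ap k 2 mu (ap (2+k) 2 b (ap (3+k) 2 b (ap (1+k) 2 b v))))))).
  lhs_only.
  swr mu mu (2+k) (4+k) (3+k).
  rwr (L_bmu1 (k:=1+k)).
  sw b mu (1+k) (4+k) (4+k).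
  sw b mu (2+k) (4+k) (4+k).
  sw b b (1+k) (3+k) (3+k).
  rwr (L_assoc (k:=k)).
  sw mu mu k (4+k) (3+k).
  sw mu mu k (3+k) (2+k).
  rwr (L_assoc (k:=1+k)).
  reflexivity.
symmetry; lhs_only.
rwr (ap_swap (R:=R) (I:=I) (f:=mu) (g:=mu) (i:=k) (j:=2+k) (j':=1+k) (v:=ap (1+k) 2 b v)).
swr mu b k (2+k) (1+k).
rwr (L_bmu2 (k:=2+k)).
sw mu mu k (3+k) (2+k).
sw mu mu k (2+k) (1+k).
reflexivity.
Qed.

Lemma C_XY k v : bnd (1 + k) v ->
  teq (Mm k (Pm k (Mm (1+k) (Dm (1+k) (Gm (2+k) (ap (1+k) 1 Delta (ap k 1 Delta v)))))))
      (Mm k (Mm k (Pm k (Dm (1+k) (ap k 1 Delta (Gm (1+k) (ap k 1 Delta v))))))).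
Proof.
move=> bv; rewrite /Mm /Pm /Dm /Gm.
set W := ap k 1 Delta (ap k 1 S (ap (1+k) 1 Delta (ap (2+k) 2 b (ap (3+k) 1 S (ap (2+k) 1 S
           (ap (2+k) 1 Delta (ap (1+k) 1 Delta (ap k 1 Delta v)))))))).
have bW : bnd (6 + k) W by rewrite /W; bndt.
transitivity (ap (1+k) 2 mu (ap k 2 mu (ap (1+k) 2 b (ap (3+k) 2 mu (ap (2+k) 2 mu (ap (3+k) 2 b W)))))).
  lhs_only.
  sw S mu k (2+k) (2+k).
  sw S mu k (1+k) (1+k).
  sw S b k (2+k) (2+k).
  sw Delta mu k (2+k) (3+k).
  sw Delta mu k (1+k) (2+k).
  sw Delta b k (2+k) (3+k).
  reflexivity.
rewrite (C_MA bW).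
symmetry; lhs_only.
sw Delta b k (1+k) (2+k).
sw Delta S k (2+k) (3+k).
sw Delta S k (1+k) (2+k).
sw Delta Delta k (1+k) (2+k).
rw (L_coass (k:=k)).
reflexivity.
Qed.

#[local] Instance Mm_Proper k : Proper (@teq R I ==> @teq R I) (Mm k).
Proof. by move=> x y e; rewrite /Mm e. Qed.
#[local] Instance Pm_Proper k : Proper (@teq R I ==> @teq R I) (Pm k).
Proof. by move=> x y e; rewrite /Pm e. Qed.
#[local] Instance Dm_Proper k : Proper (@teq R I ==> @teq R I) (Dm k).
Proof. by move=> x y e; rewrite /Dm e. Qed.
#[local] Instance Gm_Proper k : Proper (@teq R I ==> @teq R I) (Gm k).
Proof. by move=> x y e; rewrite /Gm e. Qed.
#[local] Instance Em_Proper k : Proper (@teq R I ==> @teq R I) (Em k).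
Proof. by move=> x y e; rewrite /Em e. Qed.

Lemma C_DS k v : bnd (1 + k) v -> teq (Pm k v) (Gm k v).
Proof.
move=> bv.
rewrite -(C_Pe bv).
have b1 : bnd (2 + k) (ap k 1 Delta v) by bndt.
rewrite -(C_DG (k := 1 + k) b1).
rewrite (C_XY bv).
have b2 : bnd (1 + k) (Gm (1 + k) (ap k 1 Delta v)) by rewrite /Gm; bndt.
rewrite (C_PD b2).
exact: (C_eG bv).
Qed.

Lemma DSu k v : bnd (1 + k) v ->
  teq (ap k 1 Delta (ap k 1 S v)) (ap k 2 b (ap (1+k) 1 S (ap k 1 S (ap k 1 Delta v)))).
Proof. exact: C_DS. Qed.

Lemma T_main v : bnd 1 v ->
  teq (ap 0 2 K (ap 0 1 S (ap 0 1 Delta (ap 0 1 Delta v))))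
      (ap 1 2 K (ap 1 1 S (ap 1 1 Delta (ap 0 1 Delta v)))).
Proof.
move=> bv.
transitivity (ap 0 2 mu (ap 1 2 mu (ap 1 2 K (ap 2 2 b (ap 3 1 Delta (ap 1 1 Delta
               (ap 1 1 S (ap 1 1 Delta (ap 0 1 Delta v))))))))).
  symmetry; lhs_only.
  rw (DSu (k:=1)).
  swr b Delta 1 3 3.
  rw (L_Kinv (k:=1)).
  rwr (L_assoc (k:=0)).
  sw mu K 0 2 1.
  sw mu Delta 0 3 2.
  sw mu S 0 2 1.
  rw (L_coass (k:=1)).
  rwr (L_coass (k:=0)).
  sw S Delta 1 2 2.
  sw mu Delta 0 2 1.
  rw (L_antiR (k:=0)).
  swr one Delta 0 0 1.
  swr one S 0 0 1.
  swr one Delta 0 1 2.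
  swr one K 0 0 1.
  rw (L_unitl (k:=0)).
  rw (L_counl (k:=0)).
  swr S Delta 0 1 1.
  rwr (L_coass (k:=0)).
  reflexivity.
rw (L_Kcomm (k:=1)).
lhs_only.
rw (DSu (k:=1)).
swr b Delta 1 3 3.
rw (L_bmu1 (k:=1)).
swr S Delta 2 3 3.
swr S Delta 1 3 3.
rw (L_coass (k:=1)).
rwr (L_coass (k:=2)).
sw S Delta 1 2 2.
sw S Delta 1 2 2.
rw (L_antiL (k:=2)).
rw (L_counl (k:=2)).
rwr (L_bone1 (k:=1)).
swr one K 1 1 2.
rw (L_unitr (k:=0)).
reflexivity.
Qed.

Lemma final_teq (w : seq I) : size w = 1 ->
  teq (lcomp (ltens 1 (lcomp K (lcomp (ltens 1 S lid) Delta)) lid) Delta w)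
      (lcomp (ltens 1 lid (lcomp K (lcomp (ltens 1 S lid) Delta))) Delta w).
Proof.
move=> sw.
have bv : bnd 1 (lid w) by exact: bnd_lid.
have eL := ap0_lid (lcomp (ltens 1 (lcomp K (lcomp (ltens 1 S lid) Delta)) lid) Delta) sw.
have eR := ap0_lid (lcomp (ltens 1 lid (lcomp K (lcomp (ltens 1 S lid) Delta))) Delta) sw.
expand_in eL; expand_in eR.
rewrite -eL -eR.
apply: (teq_compat (T_main bv)); ap_eq.
Qed.
End Alg.

Theorem mainTheorem3 (R : fieldType) (I : eqType)
    (b Delta delta mu one S K : lmap R I) :
  braided_hopf b Delta delta mu one S ->
  typed 2 0 K ->
  (* K is a beta-invariant functional: (K (x) id) o beta_{1,2} = id (x) K *)
  leqm 3 (lcomp (ltens 2 K (@lid R I)) (beta1m b 2)) (ltens 1 (@lid R I) K) ->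
  (* K * mu = mu * K  (convolution w.r.t. Lambda, C (x) H = H = H (x) C) *)
  leqm 2 (lcomp (ltens 2 K mu) (Lambda b Delta))
         (lcomp (ltens 2 mu K) (Lambda b Delta)) ->
  let Kt := lcomp K (lcomp (ltens 1 S (@lid R I)) Delta) in
  leqm 1 (lcomp (ltens 1 Kt (@lid R I)) Delta)
         (lcomp (ltens 1 (@lid R I) Kt) Delta).
Proof.
move=> [[[tb _ _] [[tD td tm t1] [Hassoc Hunitl Hunitr] [Hcoass Hcounl Hcounr] [Hbmu Hbone _ _] [Hdmu Hdone _ _]]] [tS HantiL HantiR]] tK HKinv HKcomm Kt w sw.
rewrite /Kt.
apply: final_teq; try eassumption.
Qed.
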